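(* Let $n\ge k\ge 2$ and $r\ge 0$ be integers. Then \[ \mathsf{opt}_{\operatorname{bandit}}^{\operatorname{det}}(n,k,r)\le \frac{e}{e-1}\,k\left(\ln(n/k)+r\right)+k-1. \]
   Context: Prediction with expert advice: $\mathcal{Y}=\{1,\dots,k\}$, $\mathcal{X}=[k]^n$, experts $h_i(x)=x_i$, $i=1,\dots,n$. $\mathcal{P}_r$ is the set of finite sequences of examples in $\mathcal{X}\times\mathcal{Y}$ on which some $h_i$ errs on at most $r$ examples. Bandit feedback: each round the adversary presents $x_t$, a deterministic learner predicts $\hat y_t$ as a function of past observations and $x_t$, and learns only whether $\hat y_t$ equals the true label $y_t$. $\mathsf{opt}_{\operatorname{bandit}}^{\operatorname{det}}(n,k,r)$ is the infimum over deterministic learners of the supremum over $S\in\mathcal{P}_r$ of the number of mistakes ($\hat y_t\ne y_t$). *)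

(* Defs.v *)
From HB Require Import structures.
From mathcomp Require Import all_boot all_order all_algebra.
From mathcomp Require Import all_classical all_reals all_analysis.
Set Implicit Arguments. Unset Strict Implicit. Unset Printing Implicit Defensive.
Import Order.TTheory GRing.Theory Num.Theory.
Local Open Scope classical_set_scope.
Local Open Scope ring_scope.

(* Labels Y = {1,...,k} are represented by 'I_k = {0,...,k-1};
   instances X = [k]^n are represented by {ffun 'I_n -> 'I_k};
   expert i : 'I_n predicts h_i(x) = x i. *)
Definition inst (n k : nat) := {ffun 'I_n -> 'I_k}.
Definition example (n k : nat) := (inst n k * 'I_k)%type.

Definition in_Pr (n k r : nat) (S : seq (example n k)) : Prop :=
  exists i : 'I_n, (count (fun p : example n k => p.1 i != p.2) S <= r)%N.

(* A past observation of a bandit learner: the instance x_s, the learner's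
   own prediction yhat_s, and the feedback bit [yhat_s == y_s]. *)
Definition obs (n k : nat) := (inst n k * 'I_k * bool)%type.

Definition learner (n k : nat) := seq (obs n k) -> inst n k -> 'I_k.

Fixpoint run_mistakes (n k : nat) (L : learner n k) (h : seq (obs n k))
    (S : seq (example n k)) : nat :=
  match S with
  | [::] => 0%N
  | (x, y) :: S' =>
      let yh := L h x in
      ((yh != y) + run_mistakes L (rcons h (x, yh, yh == y)) S')%N
  end.

Definition mistakes (n k : nat) (L : learner n k) (S : seq (example n k)) : nat :=
  run_mistakes L [::] S.

Definition opt_bandit_det (R : realType) (n k r : nat) : \bar R :=
  ereal_inf [set ereal_sup [set ((mistakes L S)%:R)%:E | S in in_Pr r]
            | L in [set: learner n k]].

(* Main.v *)
Require Import Defs.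
From HB Require Import structures.
From mathcomp Require Import all_boot all_order all_algebra.
From mathcomp Require Import all_classical all_reals all_analysis.
From mathcomp Require Import lra ring zify.
Import Order.TTheory GRing.Theory Num.Theory.
Local Open Scope ring_scope.

Section Real.
Variable R : realType.
Variable k : nat.
Hypothesis k2 : (2 <= k)%N.

Let e : R := expR 1.
Definition cc : R := (expR 1 - 1) / expR 1.
Definition G (W : R) : R := (expR 1 / (expR 1 - 1)) * k%:R * ln (W / k%:R) + k%:R - 1.
Definition Pinv (W : R) (M : nat) : Prop :=
  (W <= k%:R -> M%:R + 1 <= W) /\ (k%:R <= W -> M%:R <= G W).

Lemma e_ge2 : 2 <= expR 1 :> R.
Proof. have := expR_ge1Dx (1:R). by rewrite (_ : 1 + 1 = 2). Qed.

Lemma kpos : 0 < k%:R :> R.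
Proof. rewrite ltr0n. by apply: leq_trans k2. Qed.

Lemma G_ge (W : R) : k%:R <= W -> k%:R - 1 <= G W.
Proof.
move=> kW; rewrite /G -addrA addrC lerDl; apply: mulr_ge0.
  apply: mulr_ge0; last exact: ltW kpos.
  apply: divr_ge0; first exact: ltW (expR_gt0 _).
  by rewrite subr_ge0 (le_trans _ e_ge2) // ler1n.
apply: ln_ge0. by rewrite ler_pdivlMr ?kpos // mul1r.
Qed.

Lemma Pinv0 (W : R) : 1 <= W -> Pinv W 0.
Proof.
move=> W1; split; first by rewrite add0r.
move=> kW; apply: le_trans _ (G_ge W kW).
by rewrite subr_ge0 ler1n; apply: leq_trans k2.
Qed.

Lemma Pinv_step (W W' : R) (M : nat) : 1 <= W' -> W' <= W - cc * W / k%:R ->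
  W' <= W - 1 -> Pinv W' M -> Pinv W M.+1.
Proof.
move=> W'1 Hc H1 [P1 P2].
have Wp : 0 < W by apply: lt_le_trans (ltr01) _; apply: le_trans W'1 _; apply: le_trans H1 _; rewrite lerBlDr lerDl.
have W'p : 0 < W' by apply: lt_le_trans ltr01 W'1.
have kp := kpos.
have e2 := e_ge2.
split.
  move=> Wk. rewrite -natr1.
  have H : W' <= k%:R by lra.
  have := P1 H; lra.
move=> kW; case: (leP k%:R W') => kW'.
  have := P2 kW'.
  suff : G W' + 1 <= G W by rewrite -natr1; lra.
  have Hl : ln W' <= ln W - cc / k%:R.
    have -> : ln W - cc / k%:R = ln (W * expR (- (cc / k%:R))).
      by rewrite lnM ?posrE ?expR_gt0 // expRK.
    rewrite ler_ln ?posrE ?mulr_gt0 ?expR_gt0 //.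
    apply: le_trans Hc _.
    have := expR_ge1Dx (- (cc / k%:R)).
    move=> h; have := ler_wpM2l (ltW Wp) h. rewrite mulrDr mulr1 mulrN mulrA; lra.
  rewrite /G !lnM ?posrE ?invr_gt0 //.
  have h1 : expR 1 / (expR 1 - 1) * k%:R * (cc / k%:R) = 1 :> R.
    rewrite /cc; field; apply/andP; split; rewrite ?gt_eqF // ?subr_gt0; lra.
  have h2 : 0 < expR 1 / (expR 1 - 1) * k%:R :> R.
    apply: mulr_gt0 => //; apply: divr_gt0; rewrite ?expR_gt0 ?subr_gt0; lra.
  have := ler_wpM2l (ltW h2) Hl. rewrite mulrBr.
  rewrite h1 !mulrDr; lra.
have := P1 (ltW kW') => HM.
have : (M.+1)%:R < k%:R :> R by rewrite -natr1; lra.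
rewrite ltr_nat => Mk.
apply: le_trans (G_ge W kW).
have : (M.+1)%:R + 1 <= k%:R :> R by rewrite natr1 ler_nat.
lra.
Qed.
End Real.


Section Comb.
Variable R : realType.
Variables n k r : nat.

Definition cnt (h : seq (obs n k)) (i : 'I_n) : nat :=
  count (fun o : obs n k => ~~ o.2 && (o.1.1 i == o.1.2)) h.
Definition wt (h : seq (obs n k)) (i : 'I_n) : R :=
  if (cnt h i <= r)%N then expR (r%:R - (cnt h i)%:R) else 0.
Definition Wt h : R := \sum_i wt h i.
Definition cls h (x : inst n k) (y : 'I_k) : R := \sum_(i | x i == y) wt h i.
Definition Lrn (y0 : 'I_k) : learner n k :=
  fun h x => [arg max_(y > y0) cls h x y]%O.

Lemma cnt_rcons h x yh b i :
  cnt (rcons h (x, yh, b)) i = (cnt h i + (~~ b && (x i == yh)))%N.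
Proof. by rewrite /cnt -cats1 count_cat /= addn0. Qed.

Lemma wt_ge0 h i : 0 <= wt h i.
Proof. rewrite /wt; case: ifP => // _; exact: expR_ge0. Qed.

Lemma wt_ge1 h i : (cnt h i <= r)%N -> 1 <= wt h i.
Proof.
move=> H; rewrite /wt H; apply: le_trans (_ : expR 0 <= _); first by rewrite expR0.
by rewrite ler_expR subr_ge0 ler_nat.
Qed.

Lemma Wt_ge h i : wt h i <= Wt h.
Proof.
rewrite /Wt (bigD1 i) //= lerDl; apply: sumr_ge0 => j _; exact: wt_ge0.
Qed.

Lemma sum_cls h x : \sum_y cls h x y = Wt h.
Proof.
rewrite /Wt (partition_big (fun i => x i) xpredT) //.
Qed.

Lemma Lrn_max y0 h x y : cls h x y <= cls h x (Lrn y0 h x).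
Proof. rewrite /Lrn; case: arg_maxP => // z _ Hz; exact: Hz. Qed.

Lemma cls_big y0 h x : Wt h <= k%:R * cls h x (Lrn y0 h x).
Proof.
rewrite -(sum_cls h x).
apply: le_trans (_ : \sum_(y : 'I_k) cls h x (Lrn y0 h x) <= _).
  apply: ler_sum => y _; exact: Lrn_max.
by rewrite sumr_const card_ord mulr_natl.
Qed.

Lemma d_bound h (x : inst n k) (yh : 'I_k) i :
  x i == yh ->
  cc R * wt h i <= wt h i - wt (rcons h (x, yh, false)) i /\
  ((cnt h i <= r)%N -> 1 <= wt h i - wt (rcons h (x, yh, false)) i).
Proof.
move=> /eqP xi.
have e2 := e_ge2 R.
rewrite /wt cnt_rcons xi eqxx /= addn1.
case: (ltngtP (cnt h i) r) => Hc.
- rewrite -natr1 opprD addrA (expRD (r%:R - (cnt h i)%:R) (-1)) expRN.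
  have ge : expR 1 <= expR (r%:R - (cnt h i)%:R) :> R.
    rewrite ler_expR.
    have : ((cnt h i).+1)%:R <= r%:R :> R by rewrite ler_nat.
    rewrite -natr1; lra.
  set E := expR (r%:R - (cnt h i)%:R : R).
  have ep : 0 < expR 1 :> R := expR_gt0 1.
  have eq : E - E * (expR 1)^-1 = cc R * E.
    rewrite /cc; field; rewrite gt_eqF //.
  have eq2 : cc R * expR 1 = expR 1 - 1.
    rewrite /cc; field; rewrite gt_eqF //.
  rewrite eq; split => // _.
  have c0 : (0:R) <= cc R.
    rewrite /cc; apply: divr_ge0; lra.
  have := ler_wpM2l c0 ge; rewrite eq2 -/E; lra.
- split => //; rewrite subrr mulr0 //.
- rewrite Hc subrr expR0 subr0 mulr1; split => //.
  have ep : 0 < expR 1 :> R := expR_gt0 1.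
  have : (expR 1 - 1) / expR 1 <= 1 :> R.
    by rewrite ler_pdivrMr // mul1r; lra.
  by rewrite /cc.
Qed.

Lemma drop y0 h x (kp : (0 < k)%N) : 1 <= Wt h ->
  Wt (rcons h (x, Lrn y0 h x, false)) <= Wt h - cc R * Wt h / k%:R /\
  Wt (rcons h (x, Lrn y0 h x, false)) <= Wt h - 1.
Proof.
move=> W1.
set yh := Lrn y0 h x.
set h' := rcons h (x, yh, false).
have D : Wt h - Wt h' = \sum_(i | x i == yh) (wt h i - wt h' i).
  rewrite /Wt -sumrB (bigID (fun i => x i == yh)) /=.
  rewrite [X in _ + X]big1 ?addr0 // => i /negbTE Hx.
  by rewrite /wt /h' cnt_rcons Hx /= addn0 subrr.
have dge i : x i == yh -> 0 <= wt h i - wt h' i.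
  move=> Hx; have [H _] := d_bound h x yh i Hx.
  apply: le_trans H; apply: mulr_ge0; last exact: wt_ge0.
  rewrite /cc; apply: divr_ge0; have := e_ge2 R; have := expR_gt0 (1:R); lra.
have kR : 0 < k%:R :> R by rewrite ltr0n.
have Hcls := cls_big y0 h x.
split.
  suff : cc R * Wt h / k%:R <= Wt h - Wt h' by lra.
  rewrite D.
  apply: le_trans (_ : \sum_(i | x i == yh) cc R * wt h i <= _); last first.
    by apply: ler_sum => i Hx; have [H _] := d_bound h x yh i Hx.
  rewrite -mulr_sumr -mulrA; apply: ler_wpM2l.
    rewrite /cc; apply: divr_ge0; have := e_ge2 R; have := expR_gt0 (1:R); lra.
  rewrite ler_pdivrMr // mulrC; exact: Hcls.
have [i0 /andP[Hx Hc]] : exists i0, (x i0 == yh) && (cnt h i0 <= r)%N.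
  apply/existsP; apply: contraT; rewrite negb_exists => /forallP Hn.
  have : cls h x yh = 0.
    apply: big1 => i /eqP Hx; have := Hn i; rewrite Hx eqxx /= /wt -ltnNge => Hr.
    by rewrite leqNgt Hr.
  move=> H0; move: Hcls; rewrite -/yh H0 mulr0; lra.
suff : 1 <= Wt h - Wt h' by lra.
rewrite D (bigD1 i0) //=.
have [_ H] := d_bound h x yh i0 Hx.
have := H Hc.
have : 0 <= \sum_(i | (x i == yh) && (i != i0)) (wt h i - wt h' i).
  apply: sumr_ge0 => i /andP[Hi _]; exact: dge.
rewrite -/h'; lra.
Qed.

Lemma main y0 (k2 : (2 <= k)%N) S : forall h i,
  (count (fun p : example n k => p.1 i != p.2) S + cnt h i <= r)%N ->
  Pinv R k (Wt h) (run_mistakes (Lrn y0) h S).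
Proof.
have kp : (0 < k)%N by apply: leq_trans k2.
elim: S => [|[x y] S IH] h i Hi /=.
  apply: Pinv0 => //; apply: le_trans (Wt_ge h i); apply: wt_ge1.
  by rewrite add0n in Hi.
set yh := Lrn y0 h x.
move: Hi; rewrite /=.
case: (eqVneq yh y) => [Heq | Hne] Hi.
  rewrite add0n.
  have -> : Wt h = Wt (rcons h (x, yh, true)).
    by rewrite /Wt; apply: eq_bigr => j _; rewrite /wt cnt_rcons /= addn0.
  apply: (IH _ i); rewrite cnt_rcons /= addn0.
  by apply: leq_trans Hi; rewrite -addnA leq_addl.
rewrite add1n.
have Hi' : (count (fun p : example n k => p.1 i != p.2) S +
    cnt (rcons h (x, yh, false)) i <= r)%N.
  rewrite cnt_rcons /=; apply: leq_trans Hi.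
  case: (eqVneq (x i) yh) => Hxi /=.
    by rewrite Hxi Hne; lia.
  by lia.
have W1' : 1 <= Wt (rcons h (x, yh, false)).
  apply: le_trans (Wt_ge _ i); apply: wt_ge1.
  by apply: leq_trans Hi'; rewrite leq_addl.
have W1 : 1 <= Wt h.
  apply: le_trans (Wt_ge _ i); apply: wt_ge1.
  by apply: leq_trans Hi; rewrite leq_addl.
have [D1 D2] := drop y0 h x kp W1.
exact: (@Pinv_step R k k2 _ _ _ W1' D1 D2 (IH _ i Hi')).
Qed.

End Comb.

Theorem corollary4p3 (R : realType) (n k r : nat) :
  (2 <= k)%N -> (k <= n)%N ->
  (opt_bandit_det R n k r <=
   ((expR (1 : R) / (expR 1 - 1)) * k%:R * (ln (n%:R / k%:R) + r%:R)
      + k%:R - 1)%:E)%E.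
Proof.
move=> k2 kn.
have kp : (0 < k)%N by apply: leq_trans k2.
pose y0 : 'I_k := Ordinal kp.
apply: le_trans (_ : ereal_sup [set ((mistakes (Lrn R n k r y0) S)%:R)%:E | S in in_Pr r] <= _)%E.
  by apply: ereal_inf_lbound; exists (Lrn R n k r y0).
apply: ge_ereal_sup => _ [S [i Hi] <-].
rewrite lee_fin.
have := @main R n k r y0 k2 S [::] i.
rewrite /cnt /= addn0 => /(_ Hi) [_ P2].
have W0 : Wt R n k r ([::] : seq (obs n k)) = n%:R * expR r%:R.
  rewrite /Wt (eq_bigr (fun _ => expR r%:R)); last first.
    by move=> j _; rewrite /wt /cnt /= subr0.
  by rewrite sumr_const card_ord mulr_natl.
have kR : 0 < k%:R :> R by rewrite ltr0n.
have nR : 0 < n%:R :> R by rewrite ltr0n; apply: leq_trans kn.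
have kW : k%:R <= Wt R n k r ([::] : seq (obs n k)).
  rewrite W0; apply: le_trans (_ : n%:R * 1 <= _).
    by rewrite mulr1 ler_nat.
  apply: ler_wpM2l; first exact: ltW.
  by rewrite -expR0 ler_expR.
have := P2 kW; rewrite /mistakes /G W0.
have -> : n%:R * expR r%:R / k%:R = (n%:R / k%:R) * expR r%:R :> R.
  by rewrite mulrAC.
rewrite lnM ?posrE ?expR_gt0 ?divr_gt0 // expRK.
by [].
Qed.
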